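(* Let $K_{1,n}$ be the star with $n\geq 3$ leaves and let $p\geq 2$ be an integer. Then $C_{p,1}^T(K_{1,n})\leq n+2p-1$.
   Context: For an integer $p$, a $(p,1)$-total labelling of a graph $G$ is a function $c$ from $V(G)\cup E(G)$ to the nonnegative integers such that $c(u)\neq c(v)$ whenever $uv\in E(G)$, $c(e)\neq c(e')$ whenever $e,e'$ are distinct edges sharing an endpoint, and $|c(u)-c(e)|\geq p$ whenever vertex $u$ is incident to edge $e$. A list assignment $L$ assigns to every $x\in V(G)\cup E(G)$ a set $L(x)$ of nonnegative integers; $G$ is $L$-$(p,1)$-total labelable if it has a $(p,1)$-total labelling $c$ with $c(x)\in L(x)$ for all $x$. The $(p,1)$-total labelling choosability $C_{p,1}^T(G)$ is the minimum $k$ such that $G$ is $L$-$(p,1)$-total labelable for every list assignment $L$ with $|L(x)|=k$ for all $x\in V(G)\cup E(G)$. *)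

(* Defs.v *)
From mathcomp Require Import all_boot.
Set Implicit Arguments. Unset Strict Implicit. Unset Printing Implicit Defensive.

(* A simple graph: vertex set a finType T, symmetric irreflexive adjacency adj.
   Edges are the 2-element vertex sets {u,v} with adj u v. *)
Definition is_edge (T : finType) (adj : rel T) (f : {set T}) : bool :=
  [exists u, exists v, adj u v && (f == [set u; v])].

(* (p,1)-total labelling: vertex labels cv, edge labels ce (only meaningful on edges). *)
Definition is_total_labelling (T : finType) (adj : rel T) (p : nat)
    (cv : T -> nat) (ce : {set T} -> nat) : Prop :=
  [/\ (forall u v, adj u v -> cv u != cv v),
      (forall f g, is_edge adj f -> is_edge adj g -> f != g ->
         f :&: g != set0 -> ce f != ce g)
    & (forall u f, is_edge adj f -> u \in f ->
         (cv u + p <= ce f) || (ce f + p <= cv u))].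

Definition total_labelable (T : finType) (adj : rel T) (p : nat)
    (Lv : T -> seq nat) (Le : {set T} -> seq nat) : Prop :=
  exists cv ce, is_total_labelling adj p cv ce /\
    (forall v, cv v \in Lv v) /\ (forall f, is_edge adj f -> ce f \in Le f).

Definition total_choosable (T : finType) (adj : rel T) (p k : nat) : Prop :=
  forall (Lv : T -> seq nat) (Le : {set T} -> seq nat),
    (forall v, uniq (Lv v) /\ size (Lv v) = k) ->
    (forall f, is_edge adj f -> uniq (Le f) /\ size (Le f) = k) ->
    total_labelable adj p Lv Le.

(* The star K_{1,n}: centre None, leaves Some i, i < n. *)
Definition star_adj (n : nat) : rel (option 'I_n) :=
  fun u v => ((u == None) && (v != None)) || ((v == None) && (u != None)).

(* Main.v *)
Require Import Defs.
From mathcomp Require Import all_boot.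
From mathcomp Require Import zify.
Set Implicit Arguments. Unset Strict Implicit. Unset Printing Implicit Defensive.

Lemma count_sub (a : pred nat) (s t : seq nat) :
  uniq s -> {subset filter a s <= t} -> count a s <= size t.
Proof. by move=> us sub; rewrite -size_filter; apply: uniq_leq_size => //; rewrite filter_uniq. Qed.

Definition far (p a b : nat) := (a + p <= b) || (b + p <= a).

Lemma count_near p x (s : seq nat) : 1 <= p -> uniq s ->
  count (predC (far p x)) s <= (2 * p - 1).
Proof.
move=> p1 us.
have -> : 2 * p - 1 = size (iota (x - (p - 1)) (2 * p - 1)) by rewrite size_iota.
apply: count_sub => // y; rewrite mem_filter /= /far mem_iota => /andP [h _].
move: h; rewrite negb_or -!ltnNge => /andP [h1 h2]; apply/andP; split; lia.
Qed.

Lemma count_near1 p x c (s : seq nat) : 1 <= p -> uniq s ->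
  count (predC (fun y => (y != x) && far p c y)) s <= 2 * p.
Proof.
move=> p1 us.
have -> : 2 * p = size (x :: iota (c - (p - 1)) (2 * p - 1)) by rewrite /= size_iota; lia.
apply: count_sub => // y; rewrite mem_filter /= /far in_cons mem_iota => /andP [h _].
move: h; rewrite negb_and negbK negb_or -!ltnNge => /orP [->//|/andP [h1 h2]].
apply/orP; right; apply/andP; split; lia.
Qed.

Lemma greedy N (L : nat -> seq nat) :
  (forall i, i < N -> uniq (L i) /\ N <= size (L i)) ->
  exists g : nat -> nat, (forall i, i < N -> g i \in L i) /\
    (forall i j, i < N -> j < N -> i != j -> g i != g j).
Proof.
elim: N => [|N IH] H.
  by exists (fun _ => 0); split.
have [g [g1 g2]] : exists g : nat -> nat, (forall i, i < N -> g i \in L i) /\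
    (forall i j, i < N -> j < N -> i != j -> g i != g j).
  apply: IH => i iN; have [u s] := H i (ltnW iN); split => //; lia.
have [uN sN] := H N (ltnSn N).
have : has (fun y => y \notin [seq g i | i <- iota 0 N]) (L N).
  apply/negPn/negP => /hasPn hn.
  have : size (L N) <= size [seq g i | i <- iota 0 N].
    by apply: uniq_leq_size => // y /hn; rewrite negbK.
  by rewrite size_map size_iota; lia.
move=> /hasP [y yL yn].
exists (fun i => if i == N then y else g i); split.
  move=> i iN1; case: (eqVneq i N) => [->//|ne].
  by apply: g1; lia.
move=> i j iN1 jN1 ij.
case: (eqVneq i N) => [ei|ne1]; case: (eqVneq j N) => [ej|ne2].
- by rewrite ei ej eqxx in ij.
- apply/eqP => e; move: yn; rewrite e; move/negP; apply; apply/mapP; exists j => //.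
  rewrite mem_iota; lia.
- apply/eqP => e; move: yn; rewrite -e; move/negP; apply; apply/mapP; exists i => //.
  rewrite mem_iota; lia.
- apply: g2 => //; lia.
Qed.

Lemma edgeP n (f : {set option 'I_n}) :
  is_edge (@star_adj n) f -> exists i, f = [set None; Some i].
Proof.
move=> /existsP [u /existsP [v /andP [a /eqP ->]]].
move: a; rewrite /star_adj.
case: u => [i|]; case: v => [j|] //= _; last by exists j.
by exists i; rewrite setUC.
Qed.

Lemma edge_is n (i : 'I_n) : is_edge (@star_adj n) [set None; Some i].
Proof. apply/existsP; exists None; apply/existsP; exists (Some i); by rewrite eqxx. Qed.

Definition idx n (f : {set option 'I_n}) : nat :=
  if [pick i : 'I_n | Some i \in f] is Some i then val i else 0.

Lemma idxE n (i : 'I_n) : idx [set None; Some i] = i.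
Proof.
rewrite /idx; case: pickP => [j|].
  by rewrite in_set2 /= => /eqP [->].
by move=> /(_ i); rewrite in_set2 eqxx orbT.
Qed.

Theorem theorem3p1 (n p : nat) :
  3 <= n -> 2 <= p ->
  exists2 k : nat, k <= n + 2 * p - 1 & @total_choosable _ (@star_adj n) p k.
Proof.
case: n => [//|n] n3 p2; exists (n.+1 + 2 * p - 1) => // Lv Le Hv He.
set x := head 0 (Lv None).
have xin : x \in Lv None.
  have [_ s] := Hv None; rewrite /x; case: (Lv None) s => [/= s|a l _]; first lia.
  by rewrite /= in_cons eqxx.
pose L i := filter (far p x) (Le [set None; Some (inord i : 'I_n.+1)]).
have [g [g1 g2]] : exists g : nat -> nat, (forall i, i < n.+1 -> g i \in L i) /\
    (forall i j, i < n.+1 -> j < n.+1 -> i != j -> g i != g j).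
  apply: greedy => i iN.
  have [u s] := He _ (edge_is (inord i : 'I_n.+1)).
  split; first by rewrite filter_uniq.
  have c := count_near x (ltnW p2) u.
  have := count_predC (far p x) (Le [set None; Some (inord i : 'I_n.+1)]).
  rewrite /L size_filter; lia.
pose P i y := (y != x) && far p (g i) y.
pose cv (u : option 'I_n.+1) := if u is Some i then
   nth 0 (Lv (Some i)) (find (P i) (Lv (Some i))) else x.
pose ce (f : {set option 'I_n.+1}) := g (idx f).
have hasP' : forall i : 'I_n.+1, has (P i) (Lv (Some i)).
  move=> i; have [u s] := Hv (Some i).
  have c : count (predC (P i)) (Lv (Some i)) <= 2 * p := count_near1 x (g i) (ltnW p2) u.
  rewrite has_count; have := count_predC (P i) (Lv (Some i)); move: c s; move: (count (P i) _) (count (predC (P i)) _) (size (Lv (Some i))) => a b z; lia.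
have cvP : forall i : 'I_n.+1, P i (cv (Some i)) by move=> i; exact: nth_find.
have gin : forall i : 'I_n.+1, g i \in L i.
  by move=> i; apply: g1.
have Li : forall i : 'I_n.+1, L i = filter (far p x) (Le [set None; Some i]).
  by move=> i; rewrite /L inord_val.
exists cv, ce; split; last split.
- split.
  + move=> u v; rewrite /star_adj; case: u => [i|]; case: v => [j|] //= _.
      by have /andP [] := cvP i.
    by have /andP [] := cvP j; rewrite eq_sym.
  + move=> f h /edgeP [i ->] /edgeP [j ->] ne _; rewrite /ce !idxE.
    apply: g2 => //; apply: contra ne => /eqP /val_inj ->; by [].
  + move=> u f /edgeP [i ->]; rewrite /ce idxE in_set2 => /orP [/eqP ->|/eqP ->].
      by have := gin i; rewrite Li mem_filter => /andP [].
    by have /andP [_] := cvP i; rewrite /far orbC.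
- case=> [i|]; last first. by rewrite /cv.
  move=> /=.
  by apply: mem_nth; rewrite -has_find.
- move=> f /edgeP [i ->]; rewrite /ce idxE.
  by have := gin i; rewrite Li mem_filter => /andP [].
Qed.
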